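(* Let $d\in\mathbb N$, let $\mathcal S=\{s_i\}_{i=1}^{2^d}\subset[1,4]$ be strictly increasing and $\mathcal A=\{\alpha_j\}_{j=1}^d\subset\mathbb R$ be strictly increasing. Set $\|\mathcal S\|:=\min_{1\le i<j\le 2^d}|s_j-s_i|$ and $\Pi_j\mathcal A:=\prod_{i=1,i\ne j}^d|\alpha_j-\alpha_i|$ (with $\Pi_1\mathcal A=1$ if $d=1$). Suppose $A>0$ and real numbers $a_1,\dots,a_d$ satisfy $\big|\sum_{j=1}^d a_j s^{\alpha_j}\big|\le A$ for every $s\in\mathcal S$. Then for every $1\le j\le d$, $$|a_j|\le\frac{4^{d\left((\alpha_d-\alpha_1)+\max_{1\le i\le d}|\alpha_i|+2\right)}\,A}{\|\mathcal S\|^{d-1}\,\Pi_j\mathcal A}.$$ *)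

(* Defs.v *)
From Stdlib Require Import Reals List.
Import ListNotations.
Open Scope R_scope.

(* Indices are 0-based: s_1..s_{2^d} is s 0 .. s (2^d-1); alpha_1..alpha_d is alpha 0 .. alpha (d-1). *)

Definition list_min (l : list R) : R :=
  match l with nil => 0 | x :: t => fold_right Rmin x t end.

Definition list_max (l : list R) : R :=
  match l with nil => 0 | x :: t => fold_right Rmax x t end.

Definition list_sum (l : list R) : R := fold_right Rplus 0 l.
Definition list_prod (l : list R) : R := fold_right Rmult 1 l.

Definition min_sep (s : nat -> R) (N : nat) : R :=
  list_min (flat_map (fun j => map (fun i => Rabs (s j - s i)) (seq 0 j)) (seq 0 N)).

Definition Pi_prod (alpha : nat -> R) (d j : nat) : R :=
  list_prod (map (fun i => Rabs (alpha j - alpha i))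
                 (filter (fun i => negb (Nat.eqb i j)) (seq 0 d))).

Definition max_abs (alpha : nat -> R) (d : nat) : R :=
  list_max (map (fun i => Rabs (alpha i)) (seq 0 d)).

Definition gen_poly (a alpha : nat -> R) (d : nat) (x : R) : R :=
  list_sum (map (fun j => a j * Rpower x (alpha j)) (seq 0 d)).

(* Main.v *)
Require Import Defs.
From Stdlib Require Import Reals List Lra Lia Permutation ClassicalEpsilon.
Import ListNotations.
Require Import Defs.
Open Scope R_scope.

Lemma sum_perm l1 l2 : Permutation l1 l2 -> list_sum l1 = list_sum l2.
Proof. unfold list_sum; induction 1; simpl; [reflexivity| rewrite IHPermutation; reflexivity | ring | congruence]. Qed.
Lemma prod_perm l1 l2 : Permutation l1 l2 -> list_prod l1 = list_prod l2.
Proof. unfold list_prod; induction 1; simpl; [reflexivity| rewrite IHPermutation; reflexivity | ring | congruence]. Qed.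
Lemma filter_perm (p : nat -> bool) l1 l2 : Permutation l1 l2 -> Permutation (filter p l1) (filter p l2).
Proof. induction 1; simpl; try destruct (p x); try destruct (p y); eauto using Permutation. Qed.

Lemma sum_mulr (F : nat -> R) r l :
  list_sum (map (fun i => F i * r) l) = list_sum (map F l) * r.
Proof. induction l; simpl; [ring|rewrite IHl; ring]. Qed.

Lemma rp_pos x e : 0 < Rpower x e.
Proof. unfold Rpower; apply exp_pos. Qed.

Lemma exp_le' a b : a <= b -> exp a <= exp b.
Proof. intros [H|H]; [left; apply exp_increasing; auto| subst; lra]. Qed.

Lemma rp_bound x e M : 1 <= x <= 4 -> Rabs e <= M -> Rpower x e <= Rpower 4 M.
Proof.
  intros Hx He. unfold Rpower. apply exp_le'.
  assert (0 <= ln x).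
  { destruct (Req_dec x 1). subst; rewrite ln_1; lra. left; rewrite <- ln_1; apply ln_increasing; lra. }
  assert (ln x <= ln 4).
  { destruct (Req_dec x 4). subst; lra. left; apply ln_increasing; lra. }
  assert (e <= M) by (unfold Rabs in He; destruct Rcase_abs in He; lra).
  assert (0 <= M) by (pose proof (Rabs_pos e); lra).
  assert (e * ln x <= M * ln x) by (apply Rmult_le_compat_r; lra).
  assert (M * ln x <= M * ln 4) by (apply Rmult_le_compat_l; lra).
  lra.
Qed.

Lemma deriv_sum (F : nat -> R -> R) (F' : nat -> R -> R) c l :
  (forall i, derivable_pt_lim (F i) c (F' i c)) ->
  derivable_pt_lim (fun x => list_sum (map (fun i => F i x) l)) c
                   (list_sum (map (fun i => F' i c) l)).
Proof.
  intros H. induction l; simpl.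
  - apply derivable_pt_lim_const.
  - apply (derivable_pt_lim_plus (F a) (fun x => list_sum (map (fun i => F i x) l))); auto.
Qed.
Definition Pd (D : nat) := forall (t al a : nat -> R) (A M Rr dl : R),
 0 < dl -> (forall i, (i < 2^D)%nat -> 1 <= t i <= 4) ->
 (forall i, (S i < 2^D)%nat -> t i + dl <= t (S i)) ->
 (forall i, (i<D)%nat -> Rabs (al i) <= M) ->
 (forall i k, (i<D)%nat -> (k<D)%nat -> Rabs (al i - al k) <= Rr) ->
 (forall i, (i < 2^D)%nat -> Rabs (gen_poly a al D (t i)) <= A) ->
 forall j, (j<D)%nat ->
   Rabs (a j) * Pi_prod al D j * dl^(D-1) <= Rpower 4 (M + INR (D-1) * (Rr+2)) * A.

Lemma step D (IH : Pd D) (HD : (1<=D)%nat) (t al a : nat -> R) (A M Rr dl : R) k sg j j'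
  (Hperm : Permutation (seq 0 (S D)) (k :: map sg (seq 0 D)))
  (Hk : (k < S D)%nat) (Hsg : forall i, (i<D)%nat -> (sg i < S D)%nat)
  (Hj' : (j' < D)%nat) (Hsgj : sg j' = j) (Hjk : j <> k)
  (Hinj : forall i, (i < D)%nat -> sg i = j -> i = j')
  (Hdl : 0 < dl) (Ht : forall i, (i < 2^S D)%nat -> 1 <= t i <= 4)
  (Hsep : forall i, (S i < 2^S D)%nat -> t i + dl <= t (S i))
  (HM : forall i, (i<S D)%nat -> Rabs (al i) <= M)
  (HR : forall i k, (i<S D)%nat -> (k<S D)%nat -> Rabs (al i - al k) <= Rr)
  (HA : forall i, (i < 2^S D)%nat -> Rabs (gen_poly a al (S D) (t i)) <= A) :
  Rabs (a j) * Pi_prod al (S D) j * dl^(S D-1) <= Rpower 4 (M + INR (S D-1) * (Rr+2)) * A.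
Proof.
  assert (Hpow : (2^(S D) = 2 * 2^D)%nat) by (simpl; lia).
  assert (Hpos : (2^D <> 0)%nat) by (apply Nat.pow_nonzero; lia).
  set (c := al k).
  set (a' := fun i => a (sg i) * (al (sg i) - c)).
  set (al' := fun i => al (sg i) - c - 1).
  set (P4M := Rpower 4 M).
  set (A' := 2 * (A * P4M) / dl).
  set (g := fun x => list_sum (map (fun i => a i * Rpower x (al i - c)) (seq 0 (S D)))).
  set (gd := fun x => list_sum (map (fun i => a i * ((al i - c) * Rpower x (al i - c - 1))) (seq 0 (S D)))).
  assert (Hder : forall x, 0 < x -> derivable_pt_lim g x (gd x)).
  { intros x Hx. unfold g, gd.
    apply (deriv_sum (fun i x => a i * Rpower x (al i - c))
                     (fun i x => a i * ((al i - c) * Rpower x (al i - c - 1)))).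
    intros i. apply (derivable_pt_lim_scal (fun x => Rpower x (al i - c)) (a i)).
    apply derivable_pt_lim_power; auto. }
  assert (Hgd : forall x, gd x = gen_poly a' al' D x).
  { intros x. unfold gd, gen_poly.
    rewrite (sum_perm _ _ (Permutation_map _ Hperm)).
    simpl map at 1. rewrite map_map.
    unfold c at 1. rewrite Rminus_diag.
    unfold list_sum at 1. simpl fold_right. fold (list_sum (map (fun x0 : nat =>
       a (sg x0) * ((al (sg x0) - c) * Rpower x (al (sg x0) - c - 1))) (seq 0 D))).
    rewrite Rmult_0_l, Rmult_0_r, Rplus_0_l. f_equal. apply map_ext. intros i.
    unfold a', al'. ring. }
  assert (HM0 : 0 <= M). { pose proof (HM 0%nat ltac:(lia)) as X1. pose proof (Rabs_pos (al 0%nat)) as X2. eapply Rle_trans; eauto. }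
  assert (HA0 : 0 <= A). { eapply Rle_trans; [apply Rabs_pos|apply (HA 0%nat); lia]. }
  assert (Hg : forall m, (m < 2^S D)%nat -> Rabs (g (t m)) <= A * P4M).
  { intros m Hm. assert (Hx := Ht m Hm).
    assert (E : g (t m) = gen_poly a al (S D) (t m) * Rpower (t m) (- c)).
    { unfold g, gen_poly. rewrite <- sum_mulr. f_equal. apply map_ext. intros i.
      rewrite Rmult_assoc, <- Rpower_plus. f_equal. }
    rewrite E, Rabs_mult, (Rabs_right (Rpower _ _)) by (left; apply rp_pos).
    apply Rmult_le_compat; try apply Rabs_pos; try (left; apply rp_pos); auto.
    apply rp_bound; auto. rewrite Rabs_Ropp. apply HM; auto. }
  assert (Hex : forall i, exists x, (i < 2^D)%nat ->
            t (2*i)%nat < x < t (2*i+1)%nat /\ Rabs (gen_poly a' al' D x) <= A').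
  { intros i. destruct (Compare_dec.lt_dec i (2^D)) as [Hi|Hi]; [|exists 0; intros; lia].
    assert (Hs := Hsep (2*i)%nat ltac:(lia)).
    replace (S (2*i)) with (2*i+1)%nat in Hs by lia.
    assert (H1 := Ht (2*i)%nat ltac:(lia)).
    assert (H2 := Ht (2*i+1)%nat ltac:(lia)).
    destruct (MVT_cor2 g gd (t (2*i)%nat) (t (2*i+1)%nat)) as [xi [Heq Hxi]]; [lra| |].
    { intros x Hx. apply Hder. lra. }
    exists xi. intros _. split; [exact Hxi|]. rewrite <- Hgd.
    assert (Hb1 := Hg (2*i)%nat ltac:(lia)).
    assert (Hb2 := Hg (2*i+1)%nat ltac:(lia)).
    assert (Habs : Rabs (gd xi) * (t (2*i+1)%nat - t (2*i)%nat) <= 2 * (A * P4M)).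
    { rewrite <- (Rabs_right (t (2*i+1)%nat - t (2*i)%nat)) by lra.
      rewrite <- Rabs_mult, <- Heq.
      eapply Rle_trans. apply Rabs_triang. rewrite Rabs_Ropp. lra. }
    apply (Rmult_le_reg_r dl); auto.
    replace (A' * dl) with (2 * (A * P4M)) by (unfold A'; field; lra).
    eapply Rle_trans; [|exact Habs].
    apply Rmult_le_compat_l. apply Rabs_pos. lra. }
  set (xi := fun i => proj1_sig (constructive_indefinite_description _ (Hex i))).
  assert (Hxi : forall i, (i < 2^D)%nat -> t (2*i)%nat < xi i < t (2*i+1)%nat /\ Rabs (gen_poly a' al' D (xi i)) <= A').
  { intros i. exact (proj2_sig (constructive_indefinite_description _ (Hex i))). }
  assert (H := IH xi al' a' A' (Rr + 1) Rr dl Hdl).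
  specialize (H ltac:(intros i Hi; destruct (Hxi i Hi) as [[? ?] _];
                      pose proof (Ht (2*i)%nat ltac:(lia)); pose proof (Ht (2*i+1)%nat ltac:(lia)); lra)).
  specialize (H ltac:(intros i Hi; destruct (Hxi i ltac:(lia)) as [[? ?] _];
                      destruct (Hxi (S i) Hi) as [[? ?] _];
                      pose proof (Hsep (2*i+1)%nat ltac:(lia)) as Hs;
                      replace (S (2*i+1)) with (2 * S i)%nat in Hs by lia; lra)).
  specialize (H ltac:(intros i Hi; unfold al';
       pose proof (HR (sg i) k (Hsg i Hi) Hk) as Hr; unfold c;
       unfold Rabs in *; destruct Rcase_abs; destruct Rcase_abs; lra)).
  specialize (H ltac:(intros i l Hi Hl; unfold al';
       replace (al (sg i) - c - 1 - (al (sg l) - c - 1)) with (al (sg i) - al (sg l)) by ring;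
       apply HR; auto)).
  specialize (H ltac:(intros i Hi; apply (Hxi i Hi))).
  specialize (H j' Hj').
  assert (HPi : Pi_prod al (S D) j = Rabs (al j - c) * Pi_prod al' D j').
  { unfold Pi_prod.
    rewrite (prod_perm _ _ (Permutation_map _ (filter_perm _ _ _ Hperm))).
    simpl filter at 1. rewrite (proj2 (Nat.eqb_neq k j)) by auto. simpl negb.
    cbv iota. simpl map at 1. unfold list_prod at 1. simpl fold_right. f_equal.
    unfold c. f_equal. f_equal.
    rewrite filter_map_swap, map_map.
    rewrite (filter_ext_in _ (fun i => negb (i =? j')%nat)).
    - unfold list_prod; f_equal. apply map_ext. intros i. unfold al'. rewrite Hsgj. f_equal. ring.
    - intros i Hi. apply in_seq in Hi. f_equal.
      destruct (Nat.eqb_spec (sg i) j); destruct (Nat.eqb_spec i j'); auto.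
      + exfalso; apply n; apply Hinj; auto; lia.
      + subst; congruence. }
  rewrite HPi. replace (S D - 1)%nat with D by lia.
  set (E := Rr + 1 + INR (D - 1) * (Rr + 2)).
  assert (HI : INR D = INR (D-1) + 1).
  { replace D with (S (D-1)) at 1 by lia. rewrite S_INR. ring. }
  replace (M + INR D * (Rr + 2)) with (E + M + 1) by (unfold E; rewrite HI; ring).
  rewrite !Rpower_plus, Rpower_1 by lra. fold P4M.
  assert (Hd : dl^D = dl^(D-1)*dl) by (replace D with (S (D-1)) at 1 by lia; simpl; ring).
  rewrite Hd.
  unfold a' in H. rewrite Hsgj, Rabs_mult in H. fold E in H.
  assert (HP4E : 0 < Rpower 4 E) by apply rp_pos.
  assert (HP4M : 0 < P4M) by apply rp_pos.
  set (L := Rabs (a j) * Rabs (al j - c) * Pi_prod al' D j' * dl ^ (D - 1)) in H.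
  replace (Rabs (a j) * (Rabs (al j - c) * Pi_prod al' D j') * (dl ^ (D - 1) * dl)) with (L * dl) by (unfold L; ring).
  assert (H2 : L * dl <= Rpower 4 E * (2 * (A * P4M))).
  { replace (Rpower 4 E * (2 * (A * P4M))) with (Rpower 4 E * A' * dl) by (unfold A'; field; lra).
    apply Rmult_le_compat_r; lra. }
  assert (0 <= Rpower 4 E * P4M * A) by (apply Rmult_le_pos; [apply Rmult_le_pos|]; lra).
  nra.
Qed.

Lemma main_ind : forall D, Pd (S D).
Proof.
  induction D.
  - unfold Pd. intros t al a A M Rr dl Hdl Ht Hsep HM HR HA j Hj.
    assert (j = 0%nat) by lia. subst j.
    assert (H := HA 0%nat ltac:(simpl; lia)).
    assert (Hx := Ht 0%nat ltac:(simpl; lia)).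
    unfold gen_poly, list_sum in H. simpl in H. rewrite Rplus_0_r in H.
    unfold Pi_prod, list_prod. simpl. 
    replace (M + 0 * (Rr + 2)) with M by ring.
    set (x := t 0%nat) in *. set (e := al 0%nat) in *.
    assert (Hb : Rpower x (- e) <= Rpower 4 M).
    { apply rp_bound; auto. rewrite Rabs_Ropp. apply HM; lia. }
    assert (E : a 0%nat = a 0%nat * Rpower x e * Rpower x (- e)).
    { rewrite Rmult_assoc, <- Rpower_plus. replace (e + - e) with 0 by ring.
      rewrite Rpower_O by lra. ring. }
    rewrite E, Rabs_mult, (Rabs_right (Rpower x (-e))) by (left; apply rp_pos).
    rewrite Rmult_1_r, Rmult_1_r.
    rewrite Rmult_comm. apply Rmult_le_compat; auto; try apply Rabs_pos. left; apply rp_pos.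
  - unfold Pd. intros t al a A M Rr dl Hdl Ht Hsep HM HR HA j Hj.
    destruct (Compare_dec.lt_dec j (S D)) as [Hj'|Hj'].
    + apply (step (S D) IHD ltac:(lia) t al a A M Rr dl (S D) (fun i => i) j j); auto; try lia.
      rewrite map_id, seq_S. simpl. apply Permutation_sym, Permutation_cons_append.
    + assert (j = S D) by lia. subst j.
      apply (step (S D) IHD ltac:(lia) t al a A M Rr dl 0%nat S (S D) D); auto; try lia.
      change (seq 0 (S (S D))) with (0%nat :: seq 1 (S D)). rewrite <- seq_shift. apply Permutation_refl.
Qed.

Lemma fr_max_ge x l : x <= fold_right Rmax x l /\ forall y, In y l -> y <= fold_right Rmax x l.
Proof.
  induction l as [|z l IH]; simpl; [split; [lra| tauto]|].
  destruct IH as [IH1 IH2]. split.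
  - eapply Rle_trans; [exact IH1| apply Rmax_r].
  - intros y [->|Hy]; [apply Rmax_l|]. eapply Rle_trans; [apply IH2; auto| apply Rmax_r].
Qed.

Lemma list_max_ge y l : In y l -> y <= list_max l.
Proof.
  destruct l as [|x l]; simpl; [tauto|]. intros [->|Hy]; [apply (proj1 (fr_max_ge _ _)) | apply (proj2 (fr_max_ge _ _)); auto].
Qed.

Lemma fr_min_le x l : fold_right Rmin x l <= x /\ forall y, In y l -> fold_right Rmin x l <= y.
Proof.
  induction l as [|z l IH]; simpl; [split; [lra| tauto]|].
  destruct IH as [IH1 IH2]. split.
  - eapply Rle_trans; [apply Rmin_r| exact IH1].
  - intros y [->|Hy]; [apply Rmin_l|]. eapply Rle_trans; [apply Rmin_r| apply IH2; auto].
Qed.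

Lemma list_min_le y l : In y l -> list_min l <= y.
Proof.
  destruct l as [|x l]; simpl; [tauto|]. intros [->|Hy]; [apply (proj1 (fr_min_le _ _)) | apply (proj2 (fr_min_le _ _)); auto].
Qed.

Lemma list_min_pos l : l <> nil -> (forall y, In y l -> 0 < y) -> 0 < list_min l.
Proof.
  destruct l as [|x l]; [tauto|]. intros _ H. simpl.
  assert (Hx : 0 < x) by (apply H; simpl; auto).
  assert (Hl : forall y, In y l -> 0 < y) by (intros; apply H; simpl; auto).
  clear H. induction l as [|z l IH]; simpl; auto.
  apply Rmin_glb_lt; [apply Hl; simpl; auto| apply IH; intros; apply Hl; simpl; auto].
Qed.

Lemma list_prod_pos l : (forall y, In y l -> 0 < y) -> 0 < list_prod l.
Proof.
  unfold list_prod. induction l as [|z l IH]; simpl; intros H; [lra|].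
  apply Rmult_lt_0_compat; [apply H; auto| apply IH; auto].
Qed.

Theorem lemma10p3 (d : nat) (s alpha a : nat -> R) (A : R)
  (hd : (1 <= d)%nat)
  (hs_range : forall i, (i < 2 ^ d)%nat -> 1 <= s i <= 4)
  (hs_incr : forall i j, (i < j)%nat -> (j < 2 ^ d)%nat -> s i < s j)
  (halpha_incr : forall i j, (i < j)%nat -> (j < d)%nat -> alpha i < alpha j)
  (hA : 0 < A)
  (hbound : forall i, (i < 2 ^ d)%nat -> Rabs (gen_poly a alpha d (s i)) <= A) :
  forall j, (j < d)%nat ->
    Rabs (a j) <=
      Rpower 4 (INR d * ((alpha (d - 1)%nat - alpha 0%nat) + max_abs alpha d + 2)) * A
      / (min_sep s (2 ^ d) ^ (d - 1) * Pi_prod alpha d j).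
Proof.
  intros j Hj.
  assert (Hpos : (2^d <> 0)%nat) by (apply Nat.pow_nonzero; lia).
  assert (H2 : (2 <= 2^d)%nat).
  { destruct d; [lia|]. assert (2^d <> 0)%nat by (apply Nat.pow_nonzero; lia). simpl. lia. }
  set (M := max_abs alpha d). set (Rr := alpha (d-1)%nat - alpha 0%nat).
  set (dl := min_sep s (2^d)).
  assert (Hmono : forall i k, (i <= k)%nat -> (k < d)%nat -> alpha i <= alpha k).
  { intros i k Hik Hk. destruct (Nat.eq_dec i k); [subst; lra|]. left; apply halpha_incr; lia. }
  assert (HM : forall i, (i < d)%nat -> Rabs (alpha i) <= M).
  { intros i Hi. apply list_max_ge. apply in_map_iff. exists i. split; auto. apply in_seq. lia. }
  assert (HR : forall i k, (i < d)%nat -> (k < d)%nat -> Rabs (alpha i - alpha k) <= Rr).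
  { intros i k Hi Hk. unfold Rr.
    pose proof (Hmono 0%nat i ltac:(lia) Hi). pose proof (Hmono i (d-1)%nat ltac:(lia) ltac:(lia)).
    pose proof (Hmono 0%nat k ltac:(lia) Hk). pose proof (Hmono k (d-1)%nat ltac:(lia) ltac:(lia)).
    unfold Rabs; destruct Rcase_abs; lra. }
  assert (Hdl : 0 < dl).
  { unfold dl, min_sep. apply list_min_pos.
    - intros E. assert (Hin : In (Rabs (s 1%nat - s 0%nat))
         (flat_map (fun j => map (fun i => Rabs (s j - s i)) (seq 0 j)) (seq 0 (2^d)))).
      { apply in_flat_map. exists 1%nat. split; [apply in_seq; lia|]. simpl; auto. }
      rewrite E in Hin. destruct Hin.
    - intros y Hy. apply in_flat_map in Hy. destruct Hy as [jj [Hjj Hy]].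
      apply in_map_iff in Hy. destruct Hy as [ii [<- Hii]].
      apply in_seq in Hjj. apply in_seq in Hii.
      pose proof (hs_incr ii jj ltac:(lia) ltac:(lia)). apply Rabs_pos_lt. lra. }
  assert (Hsep : forall i, (S i < 2^d)%nat -> s i + dl <= s (S i)).
  { intros i Hi. assert (dl <= Rabs (s (S i) - s i)).
    { apply list_min_le. apply in_flat_map. exists (S i). split; [apply in_seq; lia|].
      apply in_map_iff. exists i. split; auto. apply in_seq; lia. }
    pose proof (hs_incr i (S i) ltac:(lia) Hi).
    rewrite Rabs_right in H by lra. lra. }
  assert (Hpi : 0 < Pi_prod alpha d j).
  { apply list_prod_pos. intros y Hy. apply in_map_iff in Hy. destruct Hy as [ii [<- Hii]].
    apply filter_In in Hii. destruct Hii as [Hii Hne]. apply in_seq in Hii.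
    apply Rabs_pos_lt. destruct (Nat.eqb_spec ii j); [discriminate|].
    destruct (Compare_dec.lt_dec ii j).
    - pose proof (halpha_incr ii j ltac:(lia) Hj). lra.
    - pose proof (halpha_incr j ii ltac:(lia) ltac:(lia)). lra. }
  destruct d as [|D]; [lia|].
  assert (Hmain := main_ind D s alpha a A M Rr dl Hdl hs_range Hsep HM HR hbound j Hj).
  assert (Hdp : 0 < dl ^ (S D - 1)) by (apply pow_lt; auto).
  apply (Rmult_le_reg_r (dl ^ (S D - 1) * Pi_prod alpha (S D) j)).
  { apply Rmult_lt_0_compat; auto. }
  unfold Rdiv. rewrite Rmult_assoc, Rinv_l by (apply Rgt_not_eq; apply Rmult_lt_0_compat; auto).
  rewrite Rmult_1_r.
  replace (Rabs (a j) * (dl ^ (S D - 1) * Pi_prod alpha (S D) j))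
    with (Rabs (a j) * Pi_prod alpha (S D) j * dl ^ (S D - 1)) by ring.
  eapply Rle_trans; [exact Hmain|].
  apply Rmult_le_compat_r; [lra|].
  apply Rle_Rpower; [lra|].
  assert (HM0 : 0 <= M) by (pose proof (HM 0%nat ltac:(lia)); pose proof (Rabs_pos (alpha 0%nat)); lra).
  assert (HR0 : 0 <= Rr) by (pose proof (HR 0%nat 0%nat ltac:(lia) ltac:(lia)) as X; rewrite Rminus_diag, Rabs_R0 in X; exact X).
  fold Rr M.
  replace (S D - 1)%nat with D by lia. rewrite S_INR.
  assert (0 <= INR D) by apply pos_INR.
  assert (0 <= INR D * M) by (apply Rmult_le_pos; auto).
  nra.
Qed.
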